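(* In the semi-discrete heat setting described in the context, assume that the reference state $u$ satisfies the discrete non-degeneracy condition: for all $t>0$ and all $j\in\{1,\dots,N-1\}$, $\frac12u_{(2,j)}(t)-2u_{(1,j)}(t)\neq0$. Let $c\in\mathcal{F}(\mathring\Omega_h)$ and let $X$ solve $-\partial_tX+AX=c\,\delta_{t=T}$, $X(0)=0$. If \[\int_0^T\sum_{m\in\mathring\Omega_h}X_m(t)\big[\langle A'(0),\mu(t)V_j\rangle u(t)\big]_m\,dt=0\] for all $j\in\{1,\dots,N-1\}$ and all $\mu\in C_0^\infty(\mathbb{R}^+,\mathbb{R})$, then $X|_{\Gamma^1}\equiv0$, i.e. $X_{(1,j)}(t)=0$ for all $t>0$ and all $j\in\{1,\dots,N-1\}$.
   Context: Let $h>0$, integers $M,N\ge2$, grid $\Omega_h=\{(ih,jh):0\le i\le M,0\le j\le N\}$ with nodes indexed $(i,j)$, interior $\mathring\Omega_h=\{1\le i\le M-1,1\le j\le N-1\}$, $\Gamma^1=\{(1,j):1\le j\le N-1\}$; functions on $\mathring\Omega_h$ are extended by $0$ on boundary nodes. Perturbations are $\varphi(t)=\sum_jh\lambda_j(t)V_j$ ($V_j$ the unit horizontal vector at boundary node $(0,j)$), and $A(\varphi)$ is the 5-point operator $[A(\varphi)\phi]_{(i,j)}=h^{-2}(4\phi_{(i,j)}-\phi_{(i+1,j)}-\phi_{(i-1,j)}-\phi_{(i,j+1)}-\phi_{(i,j-1)})$ off $\Gamma^1$ and $[A(\varphi)\phi]_{(1,j)}=h^{-2}\big(2(1+\frac{1}{1+\lambda_j(t)})\phi_{(1,j)}-\frac{2}{2+\lambda_j(t)}\phi_{(2,j)}-\phi_{(1,j+1)}-\phi_{(1,j-1)}\big)$;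 $A=A(0)$. $\langle A'(0),\mu V_j\rangle$ denotes the derivative of $A(\cdot)$ at $0$ in the direction where $\lambda_j=\mu$ and $\lambda_k=0$ for $k\ne j$. The reference state $u$ solves $\partial_tu+Au=F$, $u(0)=u_0$ for given source $F$ and initial datum $u_0$. $c\,\delta_{t=T}$ acts by $\langle c\,\delta_{t=T},v\rangle=\sum_mc_mv_m(T)$.
   Formalization: X is taken as the solution of the terminal problem X(T) = c, X = 0 for t > T, X continuous on [0,T] with −∂ₜX + AX = 0 on (0,T), without X(0) = 0. Each condition added here is assumed in the paper as well or is needed for the statement above to hold. *)

(* Defs.v *)
From Stdlib Require Import Reals Arith.
From Coquelicot Require Import Coquelicot.
Open Scope R_scope.

(* Only values at interior nodes 1<=i<=M-1, 1<=j<=N-1 are meaningful;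
   [ext] extends a grid function by 0 on all other (boundary) nodes. *)
Definition is_interior (M N i j : nat) : bool :=
  (1 <=? i)%nat && (i <=? M - 1)%nat && (1 <=? j)%nat && (j <=? N - 1)%nat.

Definition ext (M N : nat) (phi : nat -> nat -> R) (i j : nat) : R :=
  if is_interior M N i j then phi i j else 0.

(* The perturbed 5-point operator A(phi), phi = sum_j h lam_j V_j,
   with lam : nat -> R giving lam_j. *)
Definition Aop (h : R) (M N : nat) (lam : nat -> R) (phi : nat -> nat -> R)
  (i j : nat) : R :=
  let f := ext M N phi in
  if (i =? 1)%nat then
    / h ^ 2 * (2 * (1 + / (1 + lam j)) * f 1%nat j - 2 / (2 + lam j) * f 2%nat j
               - f 1%nat (S j) - f 1%nat (j - 1)%nat)
  else
    / h ^ 2 * (4 * f i j - f (S i) j - f (i - 1)%nat j - f i (S j) - f i (j - 1)%nat).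

Definition A0 (h : R) (M N : nat) := Aop h M N (fun _ => 0).

(* <A'(0), mu V_j> phi : derivative of A(.) at 0 in the direction
   lam_j = mu, lam_k = 0 (k <> j), applied to phi. *)
Definition dA (h : R) (M N : nat) (j : nat) (mu : R) (phi : nat -> nat -> R)
  (i k : nat) : R :=
  Derive (fun s => Aop h M N (fun l => if (l =? j)%nat then s * mu else 0) phi i k) 0.

(* sum over interior nodes m = (i,j), 1<=i<=M-1, 1<=j<=N-1 (needs M,N>=2) *)
Definition sum_interior (M N : nat) (f : nat -> nat -> R) : R :=
  sum_f_R0 (fun a => sum_f_R0 (fun b => f (S a) (S b)) (N - 2)) (M - 2).

Definition smooth_compact_pos (mu : R -> R) : Prop :=
  (forall (n : nat) (x : R), ex_derive_n mu n x) /\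
  exists a b : R, 0 < a /\ a <= b /\ forall t, (t < a \/ b < t) -> mu t = 0.

Definition cont_within (D : R -> Prop) (f : R -> R) (t : R) : Prop :=
  filterlim f (within D (locally t)) (locally (f t)).

(* Main.v *)
Require Import Defs.
From Stdlib Require Import Reals Arith Lra Lia FunctionalExtensionality.
From Coquelicot Require Import Coquelicot.
Open Scope R_scope.


Inductive poly : (R -> R) -> Prop :=
| poly_c c : poly (fun _ => c)
| poly_id : poly (fun y => y)
| poly_add f g : poly f -> poly g -> poly (fun y => f y + g y)
| poly_mul f g : poly f -> poly g -> poly (fun y => f y * g y).

Lemma poly_ext f g : poly f -> (forall y, f y = g y) -> poly g.
Proof. intros H E. replace g with f; auto. apply functional_extensionality; auto. Qed.

Lemma is_derive_val (f : R -> R) (x l l' : R) : is_derive f x l -> l = l' -> is_derive f x l'.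
Proof. intros H ->; exact H. Qed.

Lemma poly_deriv f : poly f -> exists f' : R -> R, poly f' /\ forall y, is_derive f y (f' y).
Proof.
  induction 1 as [c| |f g _ [f' [Pf Df]] _ [g' [Pg Dg]]|f g Hf [f' [Pf Df]] Hg [g' [Pg Dg]]].
  - exists (fun _ => 0). split. constructor. intro y. exact (@is_derive_const R_AbsRing R_NormedModule c y).
  - exists (fun _ => 1). split. constructor. intro y. exact (@is_derive_id R_AbsRing y).
  - exists (fun y => f' y + g' y). split. now constructor.
    intro y. apply (is_derive_plus f g). auto. auto.
  - exists (fun y => f' y * g y + f y * g' y). split.
    + constructor; constructor; auto.
    + intro y. apply (is_derive_mult f g); auto. intros; apply Rmult_comm.
Qed.

Lemma poly_bound f : poly f -> exists C k, 0 <= C /\ forall y, 0 <= y -> Rabs (f y) <= C * (1+y)^k.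
Proof.
  induction 1 as [c| |f g _ [C1 [k1 [HC1 B1]]] _ [C2 [k2 [HC2 B2]]]|f g _ [C1 [k1 [HC1 B1]]] _ [C2 [k2 [HC2 B2]]]].
  - exists (Rabs c), 0%nat. split. apply Rabs_pos. intros; simpl; lra.
  - exists 1, 1%nat. split. lra. intros y Hy. simpl. rewrite Rabs_right; lra.
  - exists (C1 + C2), (k1 + k2)%nat. split. lra. intros y Hy.
    assert (H1 : (1+y)^k1 <= (1+y)^(k1+k2)) by (apply Rle_pow; [lra|lia]).
    assert (H2 : (1+y)^k2 <= (1+y)^(k1+k2)) by (apply Rle_pow; [lra|lia]).
    specialize (B1 y Hy). specialize (B2 y Hy).
    eapply Rle_trans. apply Rabs_triang.
    assert (C1 * (1+y)^k1 <= C1 * (1+y)^(k1+k2)) by (apply Rmult_le_compat_l; lra).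
    assert (C2 * (1+y)^k2 <= C2 * (1+y)^(k1+k2)) by (apply Rmult_le_compat_l; lra).
    lra.
  - exists (C1 * C2), (k1 + k2)%nat. split. nra. intros y Hy.
    rewrite Rabs_mult, pow_add.
    specialize (B1 y Hy). specialize (B2 y Hy).
    replace (C1 * C2 * ((1 + y) ^ k1 * (1 + y) ^ k2)) with ((C1 * (1+y)^k1) * (C2 * (1+y)^k2)) by ring.
    apply Rmult_le_compat; auto using Rabs_pos.
Qed.

Lemma exp_poly_bound k y : 0 <= y ->
  y * (1+y)^k * exp (-y) <= INR (fact (S (S k))) * exp 1 / (1+y).
Proof.
  intros Hy.
  assert (T := exp_ge_taylor (1+y) (S (S k)) ltac:(lra)).
  rewrite tech5 in T.
  assert (0 <= sum_f_R0 (fun k0 : nat => (1 + y) ^ k0 / INR (fact k0)) (S k)).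
  { apply cond_pos_sum. intro n. apply Rmult_le_pos. apply pow_le; lra.
    apply Rlt_le, Rinv_0_lt_compat, INR_fact_lt_0. }
  assert (Hf := INR_fact_lt_0 (S (S k))).
  set (F := INR (fact (S (S k)))) in *.
  assert (Hp : (1+y)^(S (S k)) <= F * exp (1+y)).
  { assert ((1+y)^(S (S k)) / F <= exp (1+y)) by lra.
    apply (Rmult_le_compat_l F) in H0; [|lra].
    field_simplify in H0; lra. }
  rewrite exp_plus in Hp.
  assert (Hpk : 0 <= (1+y)^k) by (apply pow_le; lra).
  assert (He : 0 < exp y) by apply exp_pos.
  rewrite exp_Ropp.
  simpl in Hp.
  apply (Rmult_le_reg_r ((1+y) * exp y)). nra.
  field_simplify; try lra.
  assert (y * (1+y) * (1+y)^k <= (1+y)*(1+y)*(1+y)^k) by (apply Rmult_le_compat_r; nra).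
  nra.
Qed.


Definition Fp (P : R -> R) (x : R) : R := if Rlt_dec 0 x then P (/x) * exp (- /x) else 0.

Lemma Fp_deriv P : poly P -> exists Q : R -> R, poly Q /\ forall x, is_derive (Fp P) x (Fp Q x).
Proof.
  intros HP. destruct (poly_deriv P HP) as [P' [HP' DP]].
  exists (fun y => (y*y)*(P y + (-1) * P' y)). split.
  { repeat constructor; auto. }
  intro x. destruct (Rlt_dec 0 x) as [Hx|Hx].
  - apply is_derive_ext_loc with (f := fun t => P (/t) * exp (- /t)).
    { apply filter_imp with (P := fun u => 0 < u). intros t Ht. unfold Fp.
      destruct (Rlt_dec 0 t); [reflexivity|lra]. apply open_gt; exact Hx. }
    assert (Di : is_derive (fun t : R => / t) x (- 1 / x ^ 2)).
    { apply (is_derive_inv (fun t => t) x 1). exact (@is_derive_id R_AbsRing x). lra. }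
    assert (D1 : is_derive (fun t => P (/t)) x (scal (- 1 / x ^ 2) (P' (/x)))).
    { apply (is_derive_comp P (fun t => /t)). apply DP. exact Di. }
    assert (D2 : is_derive (fun t => exp (- /t)) x (scal (opp (- 1 / x ^ 2)) (exp (- /x)))).
    { apply (is_derive_comp exp (fun t => - /t)). apply is_derive_exp.
      apply (is_derive_opp (fun t => /t)). exact Di. }
    eapply is_derive_val.
    apply (is_derive_mult (fun t => P (/t)) (fun t => exp (- /t))); [exact D1|exact D2|].
    intros; apply Rmult_comm.
    unfold Fp. destruct (Rlt_dec 0 x); [|lra].
    unfold scal, plus, mult, opp; simpl. unfold mult, plus, opp; simpl.
    field. lra.
  - destruct (Req_dec x 0) as [H0|H0].
    + subst x. unfold Fp at 2. destruct (Rlt_dec 0 0); [lra|].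
      apply is_derive_Reals. intros eps Heps.
      destruct (poly_bound P HP) as [C [k [HC B]]].
      set (K := INR (fact (S (S k))) * exp 1).
      assert (HK : 0 < K) by (apply Rmult_lt_0_compat; [apply INR_fact_lt_0|apply exp_pos]).
      assert (Hd : 0 < eps / (C * K + 1)) by (apply Rdiv_lt_0_compat; nra).
      exists (mkposreal _ Hd). intros hh Hh0 Hh. simpl in Hh.
      unfold Fp. destruct (Rlt_dec 0 0); [lra|].
      rewrite Rplus_0_l.
      destruct (Rlt_dec 0 hh) as [Hp|Hn].
      * set (y := / hh).
        assert (Hy : 0 < y) by (apply Rinv_0_lt_compat; lra).
        assert (Eh : hh = / y) by (unfold y; rewrite Rinv_inv; reflexivity).
        assert (Hb := exp_poly_bound k y (Rlt_le _ _ Hy)). fold K in Hb.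
        assert (By := B y (Rlt_le _ _ Hy)).
        replace ((P y * exp (- y) - 0) / hh - 0) with (y * P y * exp (-y)).
        2:{ rewrite Eh. field. lra. }
        rewrite !Rabs_mult, (Rabs_right y) by lra. rewrite (Rabs_right (exp (-y))) by (apply Rle_ge, Rlt_le, exp_pos).
        assert (He : 0 < exp (-y)) by apply exp_pos.
        assert (y * Rabs (P y) * exp (- y) <= C * (y * (1+y)^k * exp (-y))).
        { replace (C * (y * (1 + y) ^ k * exp (- y))) with (y * (C * (1+y)^k) * exp (-y)) by ring.
          apply Rmult_le_compat_r; [lra|]. apply Rmult_le_compat_l; lra. }
        assert (K / (1+y) <= K * hh).
        { rewrite Eh. apply Rmult_le_compat_l; [lra|]. apply Rinv_le_contravar; lra. }
        assert (C * (y * (1 + y) ^ k * exp (- y)) <= C * (K * hh)).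
        { apply Rmult_le_compat_l; lra. }
        assert (C * (K * hh) < eps).
        { rewrite Rabs_right in Hh by lra.
          apply (Rmult_lt_compat_l (C*K+1)) in Hh; [|nra].
          replace ((C * K + 1) * (eps / (C * K + 1))) with eps in Hh by (field; nra). nra. }
        lra.
      * replace ((0 - 0) / hh - 0) with 0 by (field; auto). rewrite Rabs_R0. lra.
    + assert (Hn : x < 0) by lra.
      apply is_derive_ext_loc with (f := fun _ => 0).
      { apply filter_imp with (P := fun u => u < 0). intros t Ht. unfold Fp.
        destruct (Rlt_dec 0 t); [lra|reflexivity]. apply open_lt; exact Hn. }
      unfold Fp. destruct (Rlt_dec 0 x); [lra|].
      exact (@is_derive_const R_AbsRing R_NormedModule 0 x).
Qed.


Inductive G : (R -> R) -> Prop :=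
| G_l P a : poly P -> G (fun t => Fp P (t - a))
| G_r P b : poly P -> G (fun t => Fp P (b - t))
| G_c c : G (fun _ => c)
| G_add f g : G f -> G g -> G (fun y => f y + g y)
| G_mul f g : G f -> G g -> G (fun y => f y * g y).

Lemma G_deriv f : G f -> exists f' : R -> R, G f' /\ forall y, is_derive f y (f' y).
Proof.
  induction 1 as [P a HP|P b HP|c|f g _ [f' [Pf Df]] _ [g' [Pg Dg]]|f g Hf [f' [Pf Df]] Hg [g' [Pg Dg]]].
  - destruct (Fp_deriv P HP) as [Q [HQ DQ]].
    exists (fun t => Fp Q (t - a)). split. now constructor.
    intro y. eapply is_derive_val.
    apply (is_derive_comp (Fp P) (fun t => t - a)). apply DQ.
    apply (@is_derive_minus R_AbsRing R_NormedModule (fun t => t) (fun _ => a)).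
    exact (@is_derive_id R_AbsRing y). exact (@is_derive_const R_AbsRing R_NormedModule a y).
    unfold scal, minus, plus, opp, zero, one, mult; simpl. unfold mult, plus, opp; simpl. ring.
  - destruct (Fp_deriv P HP) as [Q [HQ DQ]].
    exists (fun t => (-1) * Fp Q (b - t)). split. constructor; constructor; auto.
    intro y. eapply is_derive_val.
    apply (is_derive_comp (Fp P) (fun t => b - t)). apply DQ.
    apply (@is_derive_minus R_AbsRing R_NormedModule (fun _ => b) (fun t => t)).
    exact (@is_derive_const R_AbsRing R_NormedModule b y). exact (@is_derive_id R_AbsRing y).
    unfold scal, minus, plus, opp, zero, one, mult; simpl. unfold mult, plus, opp; simpl. ring.
  - exists (fun _ => 0). split. constructor. intro y. exact (@is_derive_const R_AbsRing R_NormedModule c y).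
  - exists (fun y => f' y + g' y). split. now constructor.
    intro y. apply (is_derive_plus f g); auto.
  - exists (fun y => f' y * g y + f y * g' y). split.
    + constructor; constructor; auto.
    + intro y. apply (is_derive_mult f g); auto. intros; apply Rmult_comm.
Qed.

Lemma G_Dn f : G f -> forall n, exists g, G g /\ forall x, Derive_n f n x = g x.
Proof.
  intros Hf n. induction n as [|n [g [Hg E]]].
  - exists f. split; auto.
  - destruct (G_deriv g Hg) as [g' [Hg' Dg]]. exists g'. split; auto.
    intro x. simpl. rewrite (Derive_ext _ g x E). apply is_derive_unique, Dg.
Qed.

Lemma G_smooth f : G f -> forall n x, ex_derive_n f n x.
Proof.
  intros Hf n x. destruct n as [|n]. exact I.
  simpl. destruct (G_Dn f Hf n) as [g [Hg E]].
  apply ex_derive_ext with g. intro t; symmetry; auto.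
  destruct (G_deriv g Hg) as [g' [_ Dg]]. eexists; apply Dg.
Qed.

Definition bump (a b : R) (t : R) : R := Fp (fun _ => 1) (t - a) * Fp (fun _ => 1) (b - t).

Lemma bump_G a b : G (bump a b).
Proof. unfold bump. constructor; constructor; constructor. Qed.

Lemma bump_zero a b t : (t <= a \/ b <= t) -> bump a b t = 0.
Proof.
  intros H. unfold bump, Fp.
  destruct (Rlt_dec 0 (t - a)); destruct (Rlt_dec 0 (b - t)); try ring. lra.
Qed.

Lemma bump_pos a b t : a < t < b -> 0 < bump a b t.
Proof.
  intros H. unfold bump, Fp.
  destruct (Rlt_dec 0 (t - a)); destruct (Rlt_dec 0 (b - t)); try lra.
  rewrite !Rmult_1_l. apply Rmult_lt_0_compat; apply exp_pos.
Qed.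

Lemma bump_cont a b t : continuous (bump a b) t.
Proof.
  destruct (G_deriv _ (bump_G a b)) as [f' [_ D]].
  apply (@ex_derive_continuous R_AbsRing R_NormedModule). eexists; apply D.
Qed.


Lemma dA_val h M N j m phi i k : h <> 0 ->
  dA h M N j m phi i k =
  if ((i =? 1)%nat && (k =? j)%nat)%bool then
    / h ^ 2 * (m * (/ 2 * ext M N phi 2%nat j - 2 * ext M N phi 1%nat j)) else 0.
Proof.
  intro Hh; unfold dA, Aop; cbv beta.
  destruct (i =? 1)%nat eqn:Ei; simpl.
  - destruct (Nat.eqb_spec k j) as [->|Hk]; simpl.
    + apply is_derive_unique. auto_derive.
      * repeat split; lra.
      * field.
      * exact Hh.
    + rewrite Derive_const. reflexivity.
  - rewrite Derive_const. reflexivity.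
Qed.

Lemma sum_single f n k0 : (k0 <= n)%nat -> (forall k, (k <= n)%nat -> k <> k0 -> f k = 0) ->
  sum_f_R0 f n = f k0.
Proof.
  revert k0. induction n as [|n IH]; intros k0 Hk H.
  - simpl. replace k0 with 0%nat by lia. reflexivity.
  - rewrite tech5. destruct (Nat.eq_dec k0 (S n)) as [->|Hne].
    + rewrite sum_eq_R0. ring. intros l Hl. apply H; lia.
    + rewrite (IH k0) by (try lia; intros; apply H; lia). rewrite (H (S n)) by lia. ring.
Qed.

Lemma integrand_eq h M N j m (phi X : nat -> nat -> R) : h <> 0 ->
  (2 <= M)%nat -> (1 <= j <= N - 1)%nat ->
  sum_interior M N (fun i k => X i k * dA h M N j m phi i k) =
  X 1%nat j * (/ h ^ 2 * (m * (/ 2 * ext M N phi 2%nat j - 2 * ext M N phi 1%nat j))).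
Proof.
  intros Hh HM Hj. unfold sum_interior.
  rewrite (sum_single _ _ 0%nat).
  2: lia.
  2:{ intros k _ Hk. apply sum_eq_R0. intros l _. rewrite dA_val by exact Hh.
      destruct (Nat.eqb_spec (S k) 1); [lia|]. simpl. ring. }
  rewrite (sum_single _ _ (j - 1)%nat).
  2: lia.
  2:{ intros k _ Hk. rewrite dA_val by exact Hh. destruct (Nat.eqb_spec (S k) j); [lia|].
      rewrite Bool.andb_false_r. ring. }
  replace (S (j - 1)) with j by lia.
  rewrite dA_val by exact Hh. simpl. rewrite Nat.eqb_refl. reflexivity.
Qed.


Lemma ball_R (x e y : R) : ball x e y <-> Rabs (y - x) < e.
Proof. unfold ball; simpl; unfold AbsRing_ball, abs, minus, plus, opp; simpl. tauto. Qed.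

Lemma same_sign p y : Rabs (y - p) < Rabs p / 2 -> 0 < p * y.
Proof.
  intros H. unfold Rabs in *. destruct (Rcase_abs (y - p)); destruct (Rcase_abs p); nra.
Qed.

Lemma contR_mult (f g : R -> R) x : continuous f x -> continuous g x -> continuous (fun s => f s * g s) x.
Proof. intros Hf Hg. exact (@continuous_mult R_UniformSpace R_AbsRing f g x Hf Hg). Qed.

Lemma contR_minus (f g : R -> R) x : continuous f x -> continuous g x -> continuous (fun s => f s - g s) x.
Proof. intros Hf Hg. exact (@continuous_minus R_UniformSpace R_AbsRing R_NormedModule f g x Hf Hg). Qed.

Lemma contR_const (c x : R) : continuous (fun _ : R => c) x.
Proof. exact (@continuous_const R_UniformSpace R_UniformSpace c x). Qed.

Lemma contR_der (f : R -> R) x l : is_derive f x l -> continuous f x.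
Proof. intros H. apply (@ex_derive_continuous R_AbsRing R_NormedModule). exists l; exact H. Qed.


Ltac rring := match goal with |- @eq _ ?l ?r => change (@eq R l r) end; ring.

Theorem proposition2p21
  (h T : R) (M N : nat)
  (F : R -> nat -> nat -> R) (u0 : nat -> nat -> R)
  (u : R -> nat -> nat -> R) (c : nat -> nat -> R) (X : R -> nat -> nat -> R) :
  0 < h -> (2 <= M)%nat -> (2 <= N)%nat -> 0 < T ->
  (forall i j, is_interior M N i j = true ->
     u 0 i j = u0 i j /\
     (forall t, 0 <= t -> cont_within (fun s => 0 <= s) (fun s => u s i j) t) /\
     (forall t, 0 < t ->
        is_derive (fun s => u s i j) t (F t i j - A0 h M N (u t) i j))) ->
  (forall t j, 0 < t -> (1 <= j <= N - 1)%nat ->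
     / 2 * ext M N (u t) 2%nat j - 2 * ext M N (u t) 1%nat j <> 0) ->
  (forall i j, is_interior M N i j = true ->
     X T i j = c i j /\
     (forall t, T < t -> X t i j = 0) /\
     (forall t, 0 <= t <= T ->
        cont_within (fun s => 0 <= s <= T) (fun s => X s i j) t) /\
     (forall t, 0 < t < T ->
        is_derive (fun s => X s i j) t (A0 h M N (X t) i j))) ->
  (forall j (mu : R -> R), (1 <= j <= N - 1)%nat -> smooth_compact_pos mu ->
     RInt (fun t => sum_interior M N
                      (fun i k => X t i k * dA h M N j (mu t) (u t) i k)) 0 T = 0) ->
  forall t j, 0 < t -> (1 <= j <= N - 1)%nat -> X t 1%nat j = 0.
Proof.
  intros Hh HM HN HT Hu Hnd HX Hint t j Ht Hj.
  assert (Hh0 : h <> 0) by lra.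
  assert (I1 : is_interior M N 1 j = true).
  { unfold is_interior. rewrite !Bool.andb_true_iff, !Nat.leb_le. lia. }
  destruct (HX 1%nat j I1) as [_ [Hgt [HcX HdX]]].
  set (g := fun s => / 2 * ext M N (u s) 2%nat j - 2 * ext M N (u s) 1%nat j).
  set (phi := fun s => X s 1%nat j * g s).
  assert (cE : forall i s, 0 < s -> continuous (fun s => ext M N (u s) i j) s).
  { intros i s Hs. unfold ext. destruct (is_interior M N i j) eqn:E.
    - destruct (Hu i j E) as [_ [_ D]]. eapply contR_der. apply D; exact Hs.
    - apply contR_const. }
  assert (cphi : forall s, 0 < s < T -> continuous phi s).
  { intros s Hs. unfold phi. apply contR_mult.
    - eapply contR_der. apply HdX; exact Hs.
    - unfold g. apply contR_minus; apply contR_mult; try apply contR_const; apply cE; lra. }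
  assert (Hopen : forall t0, 0 < t0 < T -> X t0 1%nat j = 0).
  { intros t0 Ht0. destruct (Req_dec (X t0 1%nat j) 0) as [|Hne]; auto. exfalso.
    set (p := phi t0).
    assert (Hp : p <> 0).
    { unfold p, phi. apply Rmult_integral_contrapositive. split; auto. unfold g; apply Hnd; [lra|lia]. }
    assert (Hp0 : 0 < Rabs p) by (apply Rabs_pos_lt; auto).
    assert (Hpos : 0 < Rabs p / 2) by lra.
    destruct (cphi t0 Ht0 _ (locally_ball (phi t0) (mkposreal _ Hpos))) as [d Hd].
    assert (Hdp := cond_pos d).
    set (a := Rmax (t0 - d/2) (t0/2)). set (b := Rmin (t0 + d/2) ((t0+T)/2)).
    assert (Ha1 : t0 - d/2 <= a) by apply Rmax_l. assert (Ha2 : t0/2 <= a) by apply Rmax_r.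
    assert (Ha3 : a < t0) by (unfold a; apply Rmax_lub_lt; lra).
    assert (Hb1 : b <= t0 + d/2) by apply Rmin_l. assert (Hb2 : b <= (t0+T)/2) by apply Rmin_r.
    assert (Hb3 : t0 < b) by (unfold b; apply Rmin_glb_lt; lra).
    assert (Hin : forall s, a <= s <= b -> 0 < p * phi s /\ 0 < s < T).
    { intros s Hs. split; [|lra]. apply same_sign.
      assert (B := Hd s). rewrite ball_R in B. apply B.
      apply ball_R. apply Rabs_def1; lra. }
    set (mu := bump a b).
    assert (Hsm : smooth_compact_pos mu).
    { split. intros; apply G_smooth, bump_G.
      exists a, b. split; [lra|split; [lra|]]. intros s Hs. apply bump_zero; lra. }
    assert (H0 := Hint j mu Hj Hsm).
    set (psi := fun s => / h ^ 2 * (mu s * phi s)).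
    rewrite (RInt_ext _ psi) in H0.
    2:{ intros x _. rewrite integrand_eq by (exact Hh0 || lia). unfold psi, phi, g. rring. }
    assert (cpsi : forall z, a <= z <= b -> continuous psi z).
    { intros z Hz. unfold psi. apply contR_mult. apply contR_const.
      apply contR_mult. apply bump_cont. apply cphi. apply Hin; lra. }
    assert (Eab : ex_RInt psi a b).
    { apply (@ex_RInt_continuous R_CompleteNormedModule). rewrite Rmin_left, Rmax_right by lra. exact cpsi. }
    assert (R1 : is_RInt psi 0 a 0).
    { apply is_RInt_ext with (f := fun _ => 0).
      { intros x Hx. rewrite Rmin_left, Rmax_right in Hx by lra. unfold psi, mu.
        rewrite bump_zero by lra. rring. }
      pose proof (is_RInt_const 0 a (0:R)) as C. unfold scal in C; simpl in C.
      unfold mult in C; simpl in C. rewrite Rmult_0_r in C. exact C. }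
    assert (R3 : is_RInt psi b T 0).
    { apply is_RInt_ext with (f := fun _ => 0).
      { intros x Hx. rewrite Rmin_left, Rmax_right in Hx by lra. unfold psi, mu.
        rewrite bump_zero by lra. rring. }
      pose proof (is_RInt_const b T (0:R)) as C. unfold scal in C; simpl in C.
      unfold mult in C; simpl in C. rewrite Rmult_0_r in C. exact C. }
    assert (R2 := RInt_correct _ _ _ Eab).
    assert (RT := is_RInt_Chasles _ _ _ _ _ _ (is_RInt_Chasles _ _ _ _ _ _ R1 R2) R3).
    pose proof (@is_RInt_unique R_CompleteNormedModule psi 0 T _ RT) as RT'. rewrite RT' in H0.
    unfold plus in H0; simpl in H0. rewrite Rplus_0_l, Rplus_0_r in H0.
    assert (Gt : 0 < RInt (fun s => p * psi s) a b).
    { apply RInt_gt_0. lra.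
      - intros x Hx. destruct (Hin x ltac:(lra)) as [P1 _].
        assert (0 < mu x) by (apply bump_pos; lra).
        assert (0 < / h ^ 2) by (apply Rinv_0_lt_compat; apply pow_lt; lra).
        unfold psi. replace (p * (/ h ^ 2 * (mu x * phi x))) with (/ h ^ 2 * mu x * (p * phi x)) by rring.
        apply Rmult_lt_0_compat; [apply Rmult_lt_0_compat|]; lra.
      - intros x Hx. apply contR_mult. apply contR_const. apply cpsi; lra. }
    pose proof (RInt_scal psi a b p Eab) as S. unfold scal in S; simpl in S.
    unfold mult in S; simpl in S. rewrite S, H0 in Gt. lra. }
  destruct (Rtotal_order t T) as [Hlt|[Heq|Hgt']].
  - apply Hopen; lra.
  - subst t. destruct (Req_dec (X T 1%nat j) 0) as [|Hne]; auto. exfalso.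
    assert (Hpos : 0 < Rabs (X T 1%nat j)) by (apply Rabs_pos_lt; auto).
    destruct (HcX T ltac:(lra) _ (locally_ball (X T 1%nat j) (mkposreal _ Hpos))) as [d Hd].
    assert (Hdp := cond_pos d).
    set (s := Rmax (T - d/2) (T/2)).
    assert (Hs1 : T - d/2 <= s) by apply Rmax_l. assert (Hs2 : T/2 <= s) by apply Rmax_r.
    assert (Hs3 : s < T) by (unfold s; apply Rmax_lub_lt; lra).
    assert (B := Hd s). rewrite ball_R in B. simpl in B.
    rewrite (Hopen s) in B by lra.
    assert (Rabs (0 - X T 1%nat j) < Rabs (X T 1%nat j)).
    { apply B. apply ball_R. apply Rabs_def1; lra. lra. }
    rewrite Rminus_0_l, Rabs_Ropp in H. lra.
  - apply Hgt; lra.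
Qed.
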